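(* Let $X$ be a countably infinite set and $W=W_F$. Let $\succeq$ be a preorder on $W_F$ satisfying Strong Pareto, Permutation Invariance, and Quasi-Independence. If $w,v\in W_F$ are such that $Z=\{x\in X: w(x)\neq v(x)\}$ is finite and $w\succeq v$, then $\sum_{x\in Z}(w(x)-v(x))\ge 0$.
   Context: $W_F$ is the set of functions $X\to\mathbb R$ with finite range; addition and scalar multiplication are pointwise. For a preorder $\succeq$, $w\succ v$ means $w\succeq v$ and not $v\succeq w$. For a permutation $\pi$ of $X$, $\pi(w)(x)=w(\pi(x))$. Strong Pareto: for all $w,v\in W$, if $w(x)\ge v(x)$ for all $x$ and $w(x)>v(x)$ for some $x$, then $w\succ v$. Permutation Invariance: for all $w,v\in W$ and every permutation $\pi$ of $X$, $w\succeq v$ iff $\pi(w)\succeq\pi(v)$. Quasi-Independence: for all $w,v,u\in W$, if $w\succeq v$ then for every $\alpha\in[0,1]$, $\alpha w+(1-\alpha)u\succeq \alpha v+(1-\alpha)u$. *)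

(* Defs.v *)
From Stdlib Require Import Reals List.
Import ListNotations.
Open Scope R_scope.

Definition countably_infinite (X : Type) : Prop :=
  exists (f : nat -> X) (g : X -> nat),
    (forall n, g (f n) = n) /\ (forall x, f (g x) = x).

Definition in_WF {X : Type} (w : X -> R) : Prop :=
  exists l : list R, forall x, In (w x) l.

Definition is_perm {X : Type} (pi : X -> X) : Prop :=
  exists pinv : X -> X, (forall x, pinv (pi x) = x) /\ (forall x, pi (pinv x) = x).

Definition perm_act {X : Type} (pi : X -> X) (w : X -> R) : X -> R :=
  fun x => w (pi x).

(* A relation on X -> R, considered only on W_F. *)
Definition strictly {X : Type} (ge : (X -> R) -> (X -> R) -> Prop) w v : Prop :=
  ge w v /\ ~ ge v w.

Definition preorder_on_WF {X : Type} (ge : (X -> R) -> (X -> R) -> Prop) : Prop :=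
  (forall w, in_WF w -> ge w w) /\
  (forall w v u, in_WF w -> in_WF v -> in_WF u -> ge w v -> ge v u -> ge w u).

Definition strong_pareto {X : Type} (ge : (X -> R) -> (X -> R) -> Prop) : Prop :=
  forall w v, in_WF w -> in_WF v ->
    (forall x, w x >= v x) -> (exists x, w x > v x) -> strictly ge w v.

Definition permutation_invariance {X : Type} (ge : (X -> R) -> (X -> R) -> Prop) : Prop :=
  forall w v pi, in_WF w -> in_WF v -> is_perm pi ->
    (ge w v <-> ge (perm_act pi w) (perm_act pi v)).

Definition quasi_independence {X : Type} (ge : (X -> R) -> (X -> R) -> Prop) : Prop :=
  forall w v u, in_WF w -> in_WF v -> in_WF u -> ge w v ->
    forall alpha, 0 <= alpha <= 1 ->
      ge (fun x => alpha * w x + (1 - alpha) * u x)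
         (fun x => alpha * v x + (1 - alpha) * u x).

Definition diff_sum {X : Type} (w v : X -> R) (l : list X) : R :=
  fold_right (fun x acc => (w x - v x) + acc) 0 l.

(* Main.v *)
Require Import Defs.
From Stdlib Require Import Reals List Lra Lia ClassicalEpsilon FunctionalExtensionality.
Import ListNotations.
Open Scope R_scope.

Definition eqd {X:Type} (x y : X) : {x=y}+{x<>y} := excluded_middle_informative (x=y).

Fixpoint idx {X:Type} (x:X) (l:list X) : nat :=
  match l with [] => 0%nat | y::l' => if eqd y x then 0%nat else S (idx x l') end.

Lemma idx_spec X (x:X) l d : In x l -> (idx x l < length l)%nat /\ nth (idx x l) l d = x.
Proof. induction l as [|y l IH]; simpl; [tauto|]. intros [H|H].
 - destruct (eqd y x); [split; [lia|auto]|congruence].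
 - destruct (eqd y x); [split;[lia|auto]|]. destruct (IH H); split; [lia|auto]. Qed.

Lemma idx_nth X (l:list X) d i : NoDup l -> (i < length l)%nat -> idx (nth i l d) l = i.
Proof. intros Hnd Hi. assert (Hin: In (nth i l d) l) by (apply nth_In; auto).
 destruct (idx_spec _ _ _ d Hin) as [H1 H2].
 apply (proj1 (NoDup_nth l d) Hnd); auto. Qed.

Definition sig {X} (Z:list X) (z0:X) (x:X) : X :=
  if in_dec eqd x Z then nth (S (idx x Z)) Z z0 else x.
Definition tau {X} (Z:list X) (z0:X) (x:X) : X :=
  if in_dec eqd x Z then match idx x Z with O => nth (pred (length Z)) Z z0 | S j => nth j Z z0 end else x.

Lemma sig_out X (Z:list X) z0 x : ~ In x Z -> sig Z z0 x = x.
Proof. unfold sig. destruct (in_dec eqd x Z); tauto. Qed.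
Lemma tau_out X (Z:list X) z0 x : ~ In x Z -> tau Z z0 x = x.
Proof. unfold tau. destruct (in_dec eqd x Z); tauto. Qed.

Lemma sig_nth X (Z:list X) z0 i : NoDup Z -> (i < length Z)%nat ->
  sig Z z0 (nth i Z z0) = nth (S i) Z z0.
Proof. intros Hnd Hi. unfold sig. destruct (in_dec eqd (nth i Z z0) Z) as [H|H].
 - rewrite idx_nth; auto.
 - exfalso; apply H, nth_In; auto. Qed.

Lemma tau_nth X (Z:list X) z0 i : NoDup Z -> (i < length Z)%nat ->
  tau Z z0 (nth i Z z0) = match i with O => nth (pred (length Z)) Z z0 | S j => nth j Z z0 end.
Proof. intros Hnd Hi. unfold tau. destruct (in_dec eqd (nth i Z z0) Z) as [H|H].
 - rewrite idx_nth; auto.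
 - exfalso; apply H, nth_In; auto. Qed.

Lemma sig_perm X (z0:X) r : NoDup (z0::r) -> is_perm (sig (z0::r) z0).
Proof. intro Hnd. set (Z := z0::r). exists (tau Z z0). split; intro x.
 - destruct (in_dec eqd x Z) as [H|H].
   + destruct (idx_spec _ _ _ z0 H) as [Hi Hx]. rewrite <- Hx.
     set (i := idx x Z) in *. rewrite sig_nth; auto.
     destruct (Nat.lt_ge_cases (S i) (length Z)) as [Hl|Hl].
     * rewrite tau_nth; auto.
     * rewrite (nth_overflow Z) by auto.
       replace (tau Z z0 z0) with (tau Z z0 (nth 0 Z z0)) by reflexivity. rewrite tau_nth by (auto; simpl; lia).
       f_equal. lia.
   + rewrite sig_out, tau_out; auto.
 - destruct (in_dec eqd x Z) as [H|H].
   + destruct (idx_spec _ _ _ z0 H) as [Hi Hx]. rewrite <- Hx.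
     set (i := idx x Z) in *. rewrite tau_nth; auto.
     destruct i as [|j].
     * rewrite sig_nth by (auto; simpl in *; lia).
       rewrite (nth_overflow Z) by (simpl in *; lia). reflexivity.
     * rewrite sig_nth by (auto; lia). reflexivity.
   + rewrite tau_out, sig_out; auto.
Qed.

Lemma iter_succ_r {A} (f:A->A) k x : Nat.iter (S k) f x = Nat.iter k f (f x).
Proof. induction k; simpl in *; auto. rewrite <- IHk. reflexivity. Qed.

Lemma iter_add {A} (f:A->A) a b x : Nat.iter (a+b) f x = Nat.iter a f (Nat.iter b f x).
Proof. induction a; simpl; auto. rewrite IHa; auto. Qed.

Lemma is_perm_iter X (f:X->X) k : is_perm f -> is_perm (fun x => Nat.iter k f x).
Proof. intros [g [H1 H2]]. exists (fun x => Nat.iter k g x). split; intro x.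
 - induction k; [reflexivity|]. change (Nat.iter (S k) g (f (Nat.iter k f x)) = x).
   rewrite iter_succ_r, H1; auto.
 - induction k; [reflexivity|]. change (Nat.iter (S k) f (g (Nat.iter k g x)) = x).
   rewrite iter_succ_r, H2; auto. Qed.

Lemma in_WF_comb X (f g : X -> R) (h : R -> R -> R) : in_WF f -> in_WF g -> in_WF (fun x => h (f x) (g x)).
Proof. intros [lf Hf] [lg Hg]. exists (map (fun p => h (fst p) (snd p)) (list_prod lf lg)).
 intro x. apply (in_map (fun p => h (fst p) (snd p)) _ (f x, g x)). apply in_prod; auto. Qed.

Lemma in_WF_comp X (w : X -> R) (p : X -> X) : in_WF w -> in_WF (fun x => w (p x)).
Proof. intros [l H]; exists l; auto. Qed.

Lemma in_WF_const X (c:R) : in_WF (fun _ : X => c).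
Proof. exists [c]; simpl; auto. Qed.

Fixpoint Sk {X} (m:nat) (a: nat -> X -> R) (x:X) : R :=
  match m with O => 0 | S m' => Sk m' a x + a m' x end.
Definition avg {X} (m:nat) (a : nat -> X -> R) (x:X) : R := Sk m a x / INR m.

Lemma Sk_WF X m (a : nat -> X -> R) : (forall k, in_WF (a k)) -> in_WF (Sk m a).
Proof. intro H. induction m.
 - exact (in_WF_const X 0).
 - exact (in_WF_comb X (Sk m a) (a m) Rplus IHm (H m)). Qed.

Lemma avg_WF X m (a : nat -> X -> R) : (forall k, in_WF (a k)) -> in_WF (avg m a).
Proof. intro H. exact (in_WF_comb X (Sk m a) (fun _ => INR m) Rdiv (Sk_WF X m a H) (in_WF_const X _)). Qed.

Lemma avg_split X p (a : nat -> X -> R) : (0 < p)%nat ->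
  avg (S p) a = (fun x => (1 / INR (S p)) * a p x + (1 - 1 / INR (S p)) * avg p a x).
Proof. intro Hp. apply functional_extensionality; intro x. unfold avg. simpl Sk.
 assert (INR p <> 0) by (apply not_0_INR; lia).
 rewrite S_INR. assert (0 < INR p) by (apply lt_0_INR; lia). field. lra. Qed.

Lemma avg_ge X (ge : (X -> R) -> (X -> R) -> Prop) (Hpre: preorder_on_WF ge)
  (HQI: quasi_independence ge) (a b : nat -> X -> R) m :
  (forall k, in_WF (a k)) -> (forall k, in_WF (b k)) -> (forall k, ge (a k) (b k)) ->
  ge (avg (S m) a) (avg (S m) b).
Proof. intros Ha Hb Hab. induction m.
 - assert (E: forall c : nat -> X -> R, avg 1 c = c 0%nat).
   { intro c; apply functional_extensionality; intro x; unfold avg; simpl; field. }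
   rewrite !E; auto.
 - rewrite (avg_split X (S m) a), (avg_split X (S m) b) by lia.
   set (al := 1 / INR (S (S m))).
   assert (Hal: 0 <= al <= 1).
   { unfold al. rewrite !S_INR. assert (0 <= INR m) by apply pos_INR.
     split; [apply Rlt_le, Rdiv_lt_0_compat; lra|]. unfold Rdiv; rewrite Rmult_1_l, <- Rinv_1; apply Rinv_le_contravar; lra. }
   destruct Hpre as [_ Htr].
   assert (W1 := in_WF_comb X (a (S m)) (avg (S m) a) (fun s t => al * s + (1 - al) * t) (Ha _) (avg_WF X _ a Ha)).
   assert (W2 := in_WF_comb X (b (S m)) (avg (S m) a) (fun s t => al * s + (1 - al) * t) (Hb _) (avg_WF X _ a Ha)).
   assert (W3 := in_WF_comb X (b (S m)) (avg (S m) b) (fun s t => al * s + (1 - al) * t) (Hb _) (avg_WF X _ b Hb)).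
   simpl in W1, W2, W3.
   apply (Htr _ _ _ W1 W2 W3).
   + apply HQI; auto. apply avg_WF; auto.
   + assert (G := HQI (avg (S m) a) (avg (S m) b) (b (S m)) (avg_WF X _ a Ha) (avg_WF X _ b Hb) (Hb _) IHm (1 - al) ltac:(lra)).
     replace (fun x => al * b (S m) x + (1 - al) * avg (S m) a x) with
       (fun x => (1 - al) * avg (S m) a x + (1 - (1 - al)) * b (S m) x)
       by (apply functional_extensionality; intro; ring).
     replace (fun x => al * b (S m) x + (1 - al) * avg (S m) b x) with
       (fun x => (1 - al) * avg (S m) b x + (1 - (1 - al)) * b (S m) x)
       by (apply functional_extensionality; intro; ring).
     exact G.
Qed.

Definition listsum {X} (f : X -> R) (l : list X) : R := fold_right (fun x acc => f x + acc) 0 l.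

Lemma listsum_ext X (f g : X -> R) l : (forall x, f x = g x) -> listsum f l = listsum g l.
Proof. intro H; induction l; simpl; auto. rewrite H, IHl; auto. Qed.
Lemma listsum_plus X (f g : X -> R) l : listsum (fun x => f x + g x) l = listsum f l + listsum g l.
Proof. induction l; simpl; [ring|]. rewrite IHl; ring. Qed.
Lemma listsum_minus X (f g : X -> R) l : listsum (fun x => f x - g x) l = listsum f l - listsum g l.
Proof. induction l; simpl; [ring|]. rewrite IHl; ring. Qed.
Lemma listsum_div X (f : X -> R) c l : listsum (fun x => f x / c) l = listsum f l / c.
Proof. induction l; simpl; unfold Rdiv in *; [ring|]. rewrite IHl; ring. Qed.
Lemma listsum_map X (f : X -> R) (g : X -> X) l : listsum (fun x => f (g x)) l = listsum f (map g l).
Proof. induction l; simpl; auto. rewrite IHl; auto. Qed.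
Lemma listsum_app X (f : X -> R) l1 l2 : listsum f (l1 ++ l2) = listsum f l1 + listsum f l2.
Proof. induction l1; simpl; [ring|]. rewrite IHl1; ring. Qed.
Lemma listsum_const X (f : X -> R) c l : (forall x, In x l -> f x = c) -> listsum f l = INR (length l) * c.
Proof. induction l; simpl; intro H; [ring|]. rewrite H, IHl by auto.
 destruct (length l); simpl; ring. Qed.
Lemma listsum_Sk X m (a : nat -> X -> R) l L : (forall k, listsum (a k) l = L) ->
  listsum (Sk m a) l = INR m * L.
Proof. intro H. induction m; simpl Sk.
 - simpl INR. rewrite Rmult_0_l. clear H. induction l; [reflexivity|]. simpl. simpl in IHl. rewrite IHl; ring.
 - rewrite (listsum_plus X (Sk m a) (a m)), IHm, H, S_INR; ring. Qed.

Lemma Sk_shift X (f:X->R) (g:X->X) m x :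
  Sk m (fun k y => f (Nat.iter k g y)) (g x) = Sk m (fun k y => f (Nat.iter k g y)) x - f x + f (Nat.iter m g x).
Proof. induction m.
 - simpl. ring.
 - change (Sk m (fun k y => f (Nat.iter k g y)) (g x) + f (Nat.iter m g (g x)) =
     Sk m (fun k y => f (Nat.iter k g y)) x + f (Nat.iter m g x) - f x + f (Nat.iter (S m) g x)).
   rewrite IHm, <- iter_succ_r. ring. Qed.

Lemma Sk_fixed X (f:X->R) (g:X->X) m x : (forall k, Nat.iter k g x = x) ->
  Sk m (fun k y => f (Nat.iter k g y)) x = INR m * f x.
Proof. intro H. induction m.
 - simpl. ring.
 - change (Sk m (fun k y => f (Nat.iter k g y)) x + f (Nat.iter m g x) = INR (S m) * f x).
   rewrite IHm, H, S_INR. ring. Qed.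

Theorem lemma1 (X : Type) (HX : countably_infinite X)
  (ge : (X -> R) -> (X -> R) -> Prop)
  (Hpre : preorder_on_WF ge) (HSP : strong_pareto ge)
  (HPI : permutation_invariance ge) (HQI : quasi_independence ge)
  (w v : X -> R) (Hw : in_WF w) (Hv : in_WF v)
  (Z : list X) (HZnd : NoDup Z) (HZ : forall x, In x Z <-> w x <> v x)
  (Hwv : ge w v) :
  diff_sum w v Z >= 0.
Proof.
  destruct Z as [|z0 r].
  { unfold diff_sum; simpl; lra. }
  destruct (Rge_dec (diff_sum w v (z0::r)) 0) as [Hd|Hd]; [exact Hd|exfalso].
  apply Rnot_ge_lt in Hd.
  set (Z := z0::r) in *.
  set (n := length Z).
  set (s := sig Z z0).
  set (a := fun k x => w (Nat.iter k s x)).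
  set (b := fun k x => v (Nat.iter k s x)).
  assert (Hperm : is_perm s) by (apply sig_perm, HZnd).
  assert (Ha : forall k, in_WF (a k)) by (intro k; exact (in_WF_comp X w _ Hw)).
  assert (Hb : forall k, in_WF (b k)) by (intro k; exact (in_WF_comp X v _ Hv)).
  assert (Hab : forall k, ge (a k) (b k)).
  { intro k. apply (HPI w v (fun x => Nat.iter k s x) Hw Hv (is_perm_iter X s k Hperm)). exact Hwv. }
  assert (HAB := avg_ge X ge Hpre HQI a b (length r) Ha Hb Hab).
  change (S (length r)) with n in HAB.
  set (A := avg n a) in *. set (B := avg n b) in *.
  assert (Hn : 0 < INR n) by (apply lt_0_INR; unfold n; simpl; lia).
  assert (HnR : INR n <> 0) by lra.
  assert (Hout : forall x, ~ In x Z -> forall k, Nat.iter k s x = x).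
  { intros x Hx k; induction k; simpl; auto. rewrite IHk. apply sig_out; auto. }
  assert (Hnth : forall i, (i < n)%nat -> Nat.iter i s z0 = nth i Z z0).
  { induction i; intro Hi; [reflexivity|]. simpl. rewrite IHi by lia. apply sig_nth; auto; lia. }
  assert (Hz0 : Nat.iter n s z0 = z0).
  { change (s (Nat.iter (length r) s z0) = z0).
    rewrite Hnth by (unfold n; simpl; lia). unfold s. rewrite sig_nth by (auto; simpl; lia).
    simpl. apply nth_overflow; lia. }
  assert (Hinz : forall x, In x Z -> exists i, (i < n)%nat /\ x = Nat.iter i s z0).
  { intros x Hx. destruct (idx_spec _ x Z z0 Hx) as [H1 H2]. exists (idx x Z). split; auto.
    rewrite Hnth; auto. }
  assert (Hper : forall x, Nat.iter n s x = x).
  { intro x. destruct (in_dec eqd x Z) as [H|H].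
    - destruct (Hinz x H) as [i [_ ->]]. rewrite <- iter_add, Nat.add_comm, iter_add, Hz0. reflexivity.
    - apply Hout; auto. }
  assert (Hinv : forall x, A (s x) - B (s x) = A x - B x).
  { intro x. unfold A, B, avg, a, b. rewrite !Sk_shift, !Hper. field. auto. }
  assert (Hconst : forall x, In x Z -> A x - B x = A z0 - B z0).
  { intros x Hx. destruct (Hinz x Hx) as [i [_ ->]]. clear Hx. induction i; [reflexivity|].
    simpl. rewrite Hinv. exact IHi. }
  assert (Hzero : forall x, ~ In x Z -> A x - B x = 0).
  { intros x Hx. unfold A, B, avg, a, b. rewrite !Sk_fixed by (apply Hout; auto).
    assert (E : w x = v x).
    { destruct (Req_dec (w x) (v x)) as [E|E]; auto. exfalso; apply Hx, HZ, E. }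
    rewrite E; field; auto. }
  assert (Hmap : map s Z = r ++ [z0]).
  { apply (nth_ext _ _ (s z0) z0).
    - rewrite length_map, length_app; simpl; lia.
    - intros i Hi. rewrite length_map in Hi. rewrite map_nth. unfold s. rewrite sig_nth by auto.
      simpl. destruct (Nat.lt_ge_cases i (length r)).
      + rewrite app_nth1; auto.
      + simpl in Hi. assert (i = length r) by lia. subst i.
        rewrite app_nth2, Nat.sub_diag by lia. simpl. apply nth_overflow; lia. }
  assert (Hsumshift : forall f : X -> R, listsum (fun x => f (s x)) Z = listsum f Z).
  { intro f. rewrite listsum_map, Hmap, listsum_app. unfold Z; simpl. ring. }
  assert (Hsumiter : forall (f : X -> R) k, listsum (fun x => f (Nat.iter k s x)) Z = listsum f Z).
  { intros f k; induction k; [reflexivity|].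
    rewrite <- IHk, <- (Hsumshift (fun x => f (Nat.iter k s x))). apply listsum_ext.
    intro x. rewrite iter_succ_r. reflexivity. }
  assert (LA : listsum A Z = listsum w Z).
  { transitivity (listsum (fun x => Sk n a x / INR n) Z); [reflexivity|].
    rewrite listsum_div. change (listsum (fun x => Sk n a x) Z) with (listsum (Sk n a) Z).
    rewrite (listsum_Sk X n a Z (listsum w Z)) by (intro k; exact (Hsumiter w k)). field; auto. }
  assert (LB : listsum B Z = listsum v Z).
  { transitivity (listsum (fun x => Sk n b x / INR n) Z); [reflexivity|].
    rewrite listsum_div. change (listsum (fun x => Sk n b x) Z) with (listsum (Sk n b) Z).
    rewrite (listsum_Sk X n b Z (listsum v Z)) by (intro k; exact (Hsumiter v k)). field; auto. }
  assert (HsumD : listsum (fun x => A x - B x) Z = diff_sum w v Z).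
  { rewrite listsum_minus, LA, LB.
    change (diff_sum w v Z) with (listsum (fun x => w x - v x) Z). rewrite listsum_minus. reflexivity. }
  assert (HD : INR n * (A z0 - B z0) = diff_sum w v Z).
  { rewrite <- HsumD. symmetry. apply listsum_const. exact Hconst. }
  assert (Hneg : A z0 - B z0 < 0).
  { destruct (Rlt_or_le (A z0 - B z0) 0) as [H|H]; auto. exfalso.
    assert (0 <= INR n * (A z0 - B z0)) by (apply Rmult_le_pos; lra). lra. }
  assert (HSPBA : strictly ge B A).
  { apply HSP; try (apply avg_WF; auto).
    - intro x. destruct (in_dec eqd x Z) as [H|H].
      + specialize (Hconst x H). lra.
      + specialize (Hzero x H). lra.
    - exists z0. lra. }
  destruct HSPBA as [_ HnAB]. exact (HnAB HAB).
Qed.
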